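(* Let $f:[1,3]\to[1,3]$ be defined by $f(x)=-2x+5$ for $1\le x\le 2$ and $f(x)=x-1$ for $2\le x\le 3$. Then: (a) for every positive integer $m$, if $a_m$ denotes the number of distinct solutions $x\in[1,3]$ of $f^m(x)=x$, then $(a_m)_{m\ge1}$ is the Lucas sequence, i.e. $a_1=1$, $a_2=3$ and $a_{m+2}=a_{m+1}+a_m$ for all $m\ge1$; (b) for every positive integer $m$, $f$ has exactly $\Phi_1(m)/m$ distinct periodic orbits of minimal period $m$; (c) the sequence $(\Phi_1(m)/m)_{m\ge 6}$ is strictly increasing, and $\lim_{m\to\infty}\dfrac{\Phi_1(m+1)/(m+1)}{\Phi_1(m)/m}=\dfrac{1+\sqrt5}{2}$.
   Context: Here $f^m$ denotes the $m$-th iterate of $f$; a point $x$ has minimal period $m$ if $f^m(x)=x$ and its orbit $\{f^k(x):k\ge0\}$ has exactly $m$ elements. For an integer-valued function $\phi$ on the positive integers, define $\Phi(1,\phi)=\phi(1)$ and, if $m=p_1^{k_1}\cdots p_r^{k_r}$ with distinct primes $p_i$ and $r,k_i\ge1$, $\Phi(m,\phi)=\phi(m)-\sum_{i}\phi(m/p_i)+\sum_{i_1<i_2}\phi(m/(p_{i_1}p_{i_2}))-\cdots+(-1)^r\phi(m/(p_1\cdots p_r))$, the sums over indices in $\{1,\dots,r\}$ (equivalently $\Phi(m,\phi)=\sum_{d\mid m}\mu(m/d)\phi(d)$ with $\mu$ the Möbius function). Let $\phi$ be the Lucas sequence ($\phi(1)=1,\phi(2)=3,\phi(m+2)=\phi(m+1)+\phi(m)$)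 and set $\Phi_1(m)=\Phi(m,\phi)$. *)

(* Defs.v *)
From Stdlib Require Import Reals Lra Lia ZArith Arith List Bool.
Import ListNotations.
Open Scope R_scope.

(* The map f on [1,3]: f(x) = -2x+5 on [1,2], f(x) = x-1 on [2,3]
   (both branches give 1 at x = 2). Values outside [1,3] are irrelevant. *)
Definition fmap (x : R) : R := if Rle_dec x 2 then -2 * x + 5 else x - 1.

Fixpoint iter (m : nat) (g : R -> R) (x : R) : R :=
  match m with O => x | S k => g (iter k g x) end.

Definition in_orbit (g : R -> R) (x y : R) : Prop := exists k : nat, y = iter k g x.

Definition min_period (g : R -> R) (m : nat) (x : R) : Prop :=
  iter m g x = x /\
  exists l : list R, NoDup l /\ length l = m /\ (forall y, In y l <-> in_orbit g x y).

(* Lucas sequence, phi(1)=1, phi(2)=3, phi(m+2)=phi(m+1)+phi(m); lucas 0 = 2 unused *)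
Fixpoint lucas (n : nat) : Z :=
  match n with
  | O => 2%Z
  | S O => 1%Z
  | S ((S k) as k1) => (lucas k1 + lucas k)%Z
  end.

Definition is_primeb (p : nat) : bool :=
  andb (1 <? p)%nat (forallb (fun d => negb (p mod d =? 0)%nat) (seq 2 (p - 2))).

Definition prime_divisors (n : nat) : list nat :=
  filter (fun p => andb (is_primeb p) (n mod p =? 0)%nat) (seq 1 n).

Definition squarefreeb (n : nat) : bool :=
  forallb (fun p => negb (n mod (p * p) =? 0)%nat) (prime_divisors n).

Definition moebius (n : nat) : Z :=
  if squarefreeb n then (-1) ^ Z.of_nat (length (prime_divisors n)) else 0%Z.

Definition PhiZ (m : nat) (phi : nat -> Z) : Z :=
  fold_right Z.add 0%Z
    (map (fun d => (moebius (m / d) * phi d)%Z)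
         (filter (fun d => (m mod d =? 0)%nat) (seq 1 m))).

Definition Phi1 (m : nat) : Z := PhiZ m lucas.

Definition Phi1_over (m : nat) : R := IZR (Phi1 m) / INR m.

(* Main.v *)
From Stdlib Require Import Reals Lra Lia ZArith Znumtheory Arith List Bool Permutation.
Require Import Defs.
Import ListNotations.
Set Warnings "-deprecated".

Open Scope nat_scope.
Open Scope R_scope.

Lemma iter_S' (g : R -> R) n x : iter (S n) g x = iter n g (g x).
Proof. revert x; induction n; intros x; simpl in *; auto. rewrite <- IHn; reflexivity. Qed.

Lemma iter_add (g : R -> R) a b x : iter (a + b) g x = iter a g (iter b g x).
Proof. induction a; simpl; auto. rewrite IHa; auto. Qed.

Lemma f_range x : 1 <= x <= 3 -> 1 <= fmap x <= 3.
Proof. unfold fmap; destruct (Rle_dec x 2); lra. Qed.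

Lemma iter_range n x : 1 <= x <= 3 -> 1 <= iter n fmap x <= 3.
Proof. intros H; induction n; simpl; auto. apply f_range; auto. Qed.

Definition bt (y:R) : bool := if Rle_dec y 2 then true else false.
Definition gb (b:bool) (y:R) : R := if b then (5 - y)/2 else y + 1.
Fixpoint hw (w: list bool) (y:R) : R := match w with [] => y | b::w' => gb b (hw w' y) end.
Fixpoint Aw (w:list bool) : R := match w with [] => 1 | b :: w' => if b then - Aw w' / 2 else Aw w' end.
Fixpoint Cw (w:list bool) : R := match w with [] => 0 | b::w' => if b then (5 - Cw w')/2 else Cw w' + 1 end.

Lemma hw_affine w y : hw w y = Aw w * y + Cw w.
Proof. induction w as [|b w IH]; simpl. lra. rewrite IH; destruct b; unfold gb; field. Qed.

Definition xw (w : list bool) : R := Cw w / (1 - Aw w).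

Fixpoint itin (n:nat) (x:R) : list bool :=
  match n with O => [] | S n => bt x :: itin n (fmap x) end.

Lemma itin_length n x : length (itin n x) = n.
Proof. revert x; induction n; intros; simpl; auto. Qed.

Lemma nth_itin n x k : (k < n)%nat -> nth k (itin n x) true = bt (iter k fmap x).
Proof.
  revert x k; induction n; intros x k Hk; [lia|]. destruct k; simpl; auto.
  rewrite IHn by lia. rewrite <- iter_S'. reflexivity.
Qed.

Lemma g_f y : gb (bt y) (fmap y) = y.
Proof. unfold gb, bt, fmap; destruct (Rle_dec y 2); lra. Qed.

Lemma f_g b y : 1 <= y -> fmap (gb b y) = y.
Proof. intros H; unfold gb, fmap; destruct b; destruct (Rle_dec _ 2); lra. Qed.

Lemma hw_itin n x : hw (itin n x) (iter n fmap x) = x.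
Proof.
  revert x; induction n; intros x; simpl; auto.
  replace (fmap (iter n fmap x)) with (iter n fmap (fmap x)) by (rewrite <- iter_S'; reflexivity).
  rewrite IHn. apply g_f.
Qed.

Lemma Aw_bound w : Rabs (Aw w) <= 1 /\ (In true w -> Rabs (Aw w) <= /2).
Proof.
  induction w as [|b w IH]; simpl.
  - rewrite Rabs_R1; split; [lra|tauto].
  - destruct IH as [H1 H2]. destruct b.
    + replace (- Aw w / 2) with ((-/2) * Aw w) by field. rewrite Rabs_mult.
      replace (Rabs (-/2)) with (/2) by (rewrite Rabs_Ropp, Rabs_right; lra).
      split; intros; nra.
    + split; auto. intros [H|H]; [discriminate|auto].
Qed.

Lemma xw_unique w x : Aw w <> 1 -> hw w x = x -> x = xw w.
Proof.
  intros HA H. rewrite hw_affine in H. unfold xw.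
  apply (Rmult_eq_reg_r (1 - Aw w)). field_simplify; [lra|lra]. lra.
Qed.

Lemma xw_fixed w : Aw w <> 1 -> hw w (xw w) = xw w.
Proof. intros HA. rewrite hw_affine. unfold xw. field. lra. Qed.

Lemma fmap_le y : y <= 2 -> fmap y = -2 * y + 5.
Proof. intros; unfold fmap; destruct Rle_dec; lra. Qed.
Lemma fmap_gt y : 2 < y -> fmap y = y - 1.
Proof. intros; unfold fmap; destruct Rle_dec; lra. Qed.

Open Scope nat_scope.
Open Scope R_scope.

Definition ext (w : list bool) := w ++ [nth 0 w true].
Definition cgood (w : list bool) : Prop :=
  forall k, (k < length w)%nat -> nth k (ext w) true = false -> nth (S k) (ext w) true = true.

Lemma nth_ext_lt w k : (k < length w)%nat -> nth k (ext w) true = nth k w true.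
Proof. intros; unfold ext; apply app_nth1; auto. Qed.
Lemma nth_ext_len w j : j = length w -> nth j (ext w) true = nth 0 w true.
Proof. intros ->. unfold ext. rewrite app_nth2 by lia. rewrite Nat.sub_diag. reflexivity. Qed.

Lemma K1 m x : (1 <= m)%nat -> 1 <= x <= 3 -> iter m fmap x = x -> cgood (itin m x).
Proof.
  intros Hm Hx Hf k Hk. rewrite itin_length in Hk.
  assert (E: forall j, (j <= m)%nat -> nth j (ext (itin m x)) true = bt (iter j fmap x)).
  { intros j Hj. destruct (Nat.eq_dec j m).
    - subst. rewrite nth_ext_len by (rewrite itin_length; auto).
      rewrite nth_itin by lia. simpl. rewrite Hf; reflexivity.
    - rewrite nth_ext_lt by (rewrite itin_length; lia). apply nth_itin; lia. }
  rewrite !E by lia. unfold bt. simpl iter.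
  pose proof (iter_range k x Hx).
  destruct (Rle_dec (iter k fmap x) 2) as [a|a]; intros HH; [discriminate|].
  destruct (Rle_dec (fmap _) 2) as [b|b]; auto. exfalso. apply b.
  apply Rnot_le_lt in a. rewrite fmap_gt by lra. lra.
Qed.

Definition ladm (s : list bool) : Prop :=
  forall k, (S k < length s)%nat -> nth k s true = false -> nth (S k) s true = true.
Definition Iv (b:bool) (y:R) : Prop := if b then 1 <= y <= 2 else 2 <= y <= 3.
Definition Dv (b:bool) (y:R) : Prop := if b then 1 <= y <= 3 else 1 <= y <= 2.

Lemma suffix_range s : s <> [] -> ladm s -> forall y, Dv (last s true) y -> Iv (hd true s) (hw s y).
Proof.
  induction s as [|b s IH]; intros Hne Hl y Hy; [congruence|].
  destruct s as [|b' s'].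
  - clear IH. simpl in *. unfold Iv, Dv, gb in *; destruct b; simpl in *; lra.
  - assert (Hl' : ladm (b'::s')).
    { intros k Hk Hn. apply (Hl (S k)); simpl in *; auto; lia. }
    assert (IH' := IH ltac:(discriminate) Hl' y Hy).
    simpl hw. simpl hd in *. unfold Iv in *. unfold gb. destruct b.
    + destruct b'; simpl in *; lra.
    + assert (b' = true) by (apply (Hl 0%nat); simpl; auto; lia). subst b'. simpl in *; lra.
Qed.

Lemma good_has_true w : (1 <= length w)%nat -> cgood w -> In true w.
Proof.
  intros Hl Hg. destruct w as [|c u]; simpl in Hl; [lia|].
  destruct c; [left; auto|]. right.
  specialize (Hg 0%nat ltac:(simpl; lia) eq_refl).
  destruct u as [|a u]; simpl in Hg. discriminate.
  subst; left; auto.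
Qed.

Lemma skipn_nth_cons (w : list bool) k : (k < length w)%nat -> skipn k w = nth k w true :: skipn (S k) w.
Proof.
  revert k; induction w as [|a w IH]; intros k Hk; simpl in Hk; [lia|].
  destruct k; simpl; auto. apply IH; lia.
Qed.

Lemma last_nth (w : list bool) : w <> [] -> last w true = nth (length w - 1) w true.
Proof.
  intros H. destruct w as [|a w]; [congruence|]. clear H. simpl length. rewrite Nat.sub_succ, Nat.sub_0_r.
  revert a; induction w as [|b w IH]; intros a; auto.
  change (last (b :: w) true = nth (length w) (b :: w) true). apply IH.
Qed.

Lemma last_skipn (w : list bool) k : (k < length w)%nat -> last (skipn k w) true = last w true.
Proof.
  revert k; induction w as [|a w IH]; intros k Hk; simpl in Hk; [lia|].
  destruct k; simpl; auto. rewrite IH by lia.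
  destruct w; simpl in *; [lia|auto].
Qed.

Lemma ladm_skipn w k : cgood w -> ladm (skipn k w).
Proof.
  intros Hg i Hi Hn. rewrite length_skipn in Hi. rewrite nth_skipn in *.
  specialize (Hg (k+i)%nat ltac:(lia)).
  rewrite nth_ext_lt in Hg by lia. rewrite nth_ext_lt in Hg by lia.
  replace (k + S i)%nat with (S (k+i)) by lia. auto.
Qed.

Lemma fmap_32 n : (1 <= n)%nat -> iter n fmap (3/2) = 1 \/ iter n fmap (3/2) = 2 \/ iter n fmap (3/2) = 3.
Proof.
  intros Hn. induction n; [lia|].
  destruct n. simpl. rewrite fmap_le; lra.
  change (iter (S (S n)) fmap (3/2)) with (fmap (iter (S n) fmap (3/2))).
  destruct (IHn ltac:(lia)) as [E|[E|E]]; rewrite E;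
    [rewrite fmap_le|rewrite fmap_le|rewrite fmap_gt]; lra.
Qed.

Lemma K3 w : (1 <= length w)%nat -> cgood w ->
  1 <= xw w <= 3 /\ iter (length w) fmap (xw w) = xw w /\ itin (length w) (xw w) = w.
Proof.
  intros Hm Hg. set (m := length w). set (x := xw w).
  destruct (Aw_bound w) as [_ HA2]. specialize (HA2 (good_has_true w Hm Hg)).
  assert (HA : Aw w < 1) by (apply Rabs_def2 in HA2 || (unfold Rabs in HA2; destruct Rcase_abs in HA2); lra).
  assert (Hwne : w <> []) by (intro E; subst w; simpl in Hm; lia).
  set (l := last w true).
  assert (Hl0 : l = false -> nth 0 w true = true).
  { intros E. unfold l in E. rewrite last_nth in E by auto.
    specialize (Hg (length w - 1)%nat ltac:(lia)).
    rewrite nth_ext_lt in Hg by lia. rewrite nth_ext_len in Hg by lia. auto. }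
  assert (Hmap : forall y, Dv l y -> Dv l (hw w y)).
  { intros y Hy. pose proof (suffix_range w Hwne (ladm_skipn w 0 Hg) y Hy) as H.
    replace (hd true w) with (nth 0 w true) in H by (destruct w; [congruence|reflexivity]).
    unfold Dv, Iv in *. destruct l. destruct (nth 0 w true); simpl in *; lra.
    rewrite Hl0 in H by auto. simpl in H. lra. }
  set (hi := if l then 3 else 2).
  assert (Hx : 1 <= x <= hi).
  { assert (H1 := Hmap 1 ltac:(unfold Dv; destruct l; lra)).
    assert (H2 := Hmap hi ltac:(unfold Dv, hi; destruct l; lra)).
    rewrite !hw_affine in H1, H2.
    assert (E : x * (1 - Aw w) = Cw w) by (unfold x, xw; field; lra).
    unfold Dv, hi in *. destruct l; split; nra. }
  assert (Hx3 : 1 <= x <= 3) by (unfold hi in Hx; destruct l; lra).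
  assert (HxD : Dv l x) by (unfold Dv, hi in *; destruct l; lra).
  set (z := fun k => hw (skipn k w) x).
  assert (Hz0 : z 0%nat = x) by (unfold z, x; simpl; apply xw_fixed; lra).
  assert (Hzm : z m = x) by (unfold z, m; rewrite skipn_all; reflexivity).
  assert (HzI : forall k, (k < m)%nat -> Iv (nth k w true) (z k)).
  { intros k Hk. unfold z.
    replace (nth k w true) with (hd true (skipn k w)) by (rewrite skipn_nth_cons by auto; reflexivity).
    apply suffix_range.
    - rewrite skipn_nth_cons by auto. discriminate.
    - apply ladm_skipn; auto.
    - rewrite last_skipn by auto. auto. }
  assert (Hzg : forall k, (k < m)%nat -> z k = gb (nth k w true) (z (S k))).
  { intros k Hk. unfold z. rewrite skipn_nth_cons by auto. reflexivity. }
  assert (Hzr : forall k, (k <= m)%nat -> 1 <= z k <= 3).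
  { intros k Hk. destruct (Nat.eq_dec k m). subst k; rewrite Hzm; lra.
    specialize (HzI k ltac:(lia)). unfold Iv in HzI; destruct (nth k w true); simpl in HzI; lra. }
  assert (Hit : forall k, (k <= m)%nat -> iter k fmap x = z k).
  { induction k; intros Hk. simpl; auto.
    simpl. rewrite IHk by lia. rewrite Hzg by lia. apply f_g. apply Hzr; lia. }
  assert (Hper : iter m fmap x = x) by (rewrite Hit by lia; auto).
  split; [unfold hi in Hx; destruct l; lra|]. split; auto.
  apply nth_ext with (d := true) (d' := true). rewrite itin_length; auto.
  intros k Hk. rewrite itin_length in Hk. rewrite nth_itin by auto. rewrite Hit by lia.
  pose proof (HzI k Hk) as HzIk. unfold bt. destruct (Rle_dec (z k) 2) as [Hle|Hgt].
  - destruct (nth k w true) eqn:E; auto. simpl in HzIk.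
    assert (Ez : z k = 2) by lra. exfalso.
    set (j := if Nat.eq_dec k 0 then (m - 1)%nat else (k - 1)%nat).
    assert (Hj : (j < m)%nat) by (unfold j; destruct Nat.eq_dec; lia).
    assert (HSj : nth (S j) (ext w) true = false /\ z (S j) = 2).
    { unfold j; destruct (Nat.eq_dec k 0).
      - subst k. replace (S (m-1)) with m by lia. rewrite nth_ext_len by auto. split; auto.
        rewrite Hzm. rewrite <- Hz0. auto.
      - replace (S (k-1)) with k by lia. rewrite nth_ext_lt by auto. auto. }
    destruct HSj as [HS1 HS2].
    assert (Hjt : nth j w true = true).
    { rewrite <- (nth_ext_lt w j) by auto. destruct (nth j (ext w) true) eqn:E2; auto.
      rewrite (Hg j Hj E2) in HS1. discriminate. }
    specialize (HzI j Hj). rewrite Hjt in HzI. simpl in HzI.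
    specialize (Hzg j Hj). rewrite Hjt in Hzg.
    assert (Hfz : fmap (z j) = 2) by (rewrite <- HS2, Hzg; apply f_g; apply Hzr; lia).
    assert (Ezj : z j = 3/2) by (unfold fmap in Hfz; destruct Rle_dec; lra).
    assert (Hpj : iter m fmap (z j) = z j).
    { rewrite <- Hit by lia. rewrite <- iter_add. rewrite Nat.add_comm. rewrite iter_add. rewrite Hper. auto. }
    rewrite Ezj in Hpj. destruct (fmap_32 m Hm) as [E3|[E3|E3]]; rewrite Hpj in E3; lra.
  - destruct (nth k w true); simpl in HzIk; auto. lra.
Qed.

Open Scope nat_scope.

Fixpoint W (n:nat) (p q : bool) : list (list bool) :=
  match n with
  | O => if p || q then [[]] else []
  | S n => map (cons true) (W n true q) ++ (if p then map (cons false) (W n false q) else [])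
  end.

Fixpoint okc (p : bool) (u : list bool) (q : bool) : bool :=
  match u with [] => p || q | a :: u' => (p || a) && okc a u' q end.

Lemma W_spec n p q w : In w (W n p q) <-> length w = n /\ okc p w q = true.
Proof.
  revert p w; induction n; intros p w; simpl.
  - destruct (p || q) eqn:E; simpl; split.
    + intros [H|[]]; subst; simpl; auto.
    + intros [H1 H2]; destruct w; simpl in *; auto; discriminate.
    + intros [].
    + intros [H1 H2]; destruct w; simpl in *; [congruence|discriminate].
  - rewrite in_app_iff, in_map_iff. split.
    + intros [[u [<- Hu]]|H].
      * apply IHn in Hu. destruct Hu as [Hl Hu]. simpl. rewrite Hl, Hu, orb_true_r; auto.
      * destruct p; [|destruct H]. apply in_map_iff in H. destruct H as [u [<- Hu]].
        apply IHn in Hu. destruct Hu as [Hl Hu]. simpl. rewrite Hl, Hu; auto.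
    + intros [Hl Hok]. destruct w as [|a u]; simpl in Hl; [discriminate|].
      simpl in Hok. apply andb_true_iff in Hok. destruct Hok as [H1 H2].
      destruct a.
      * left. exists u; split; auto. apply IHn; auto.
      * right. destruct p; [|discriminate]. apply in_map_iff. exists u; split; auto. apply IHn; auto.
Qed.

Lemma NoDup_map_inj {A B} (f : A -> B) l : (forall x y, f x = f y -> x = y) -> NoDup l -> NoDup (map f l).
Proof.
  intros Hf Hl; induction Hl; simpl; constructor; auto.
  intros H'. apply in_map_iff in H'. destruct H' as [y [E Hy]]. apply Hf in E; subst; auto.
Qed.

Lemma W_nodup n p q : NoDup (W n p q).
Proof.
  revert p; induction n; intros p; simpl.
  - destruct (p||q); constructor; auto. constructor.
  - apply NoDup_app.
    + apply NoDup_map_inj; auto. intros x y H; inversion H; auto.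
    + destruct p; [|constructor]. apply NoDup_map_inj; auto. intros x y H; inversion H; auto.
    + intros x H1 H2. apply in_map_iff in H1. destruct p; [|destruct H2].
      apply in_map_iff in H2. destruct H1 as [u [<- _]], H2 as [v [E _]]. discriminate.
Qed.

Fixpoint fib (n:nat) : nat := match n with 0 => 0 | S k => match k with 0 => 1 | S j => fib k + fib j end end.

Lemma W_len n p q : length (W n p q) = fib (n + (if p then 1 else 0) + (if q then 1 else 0)).
Proof.
  revert p; induction n; intros p.
  - destruct p, q; reflexivity.
  - cbn [W]. rewrite length_app, length_map, IHn. destruct p.
    + rewrite length_map, IHn.
      replace (S n + 1 + (if q then 1 else 0))%nat with (S (S (n + (if q then 1 else 0)))) by (destruct q; lia).
      replace (n + 1 + (if q then 1 else 0))%nat with (S (n + (if q then 1 else 0))) by (destruct q; lia).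
      replace (n + 0 + (if q then 1 else 0))%nat with (n + (if q then 1 else 0))%nat by lia.
      reflexivity.
    + simpl length. rewrite Nat.add_0_r.
      replace (S n + 0 + (if q then 1 else 0))%nat with (n + 1 + (if q then 1 else 0))%nat by lia. reflexivity.
Qed.

Lemma okc_nth p u q : okc p u q = true <->
  forall k, (k < S (length u))%nat -> nth k (p :: u ++ [q]) true = false -> nth (S k) (p :: u ++ [q]) true = true.
Proof.
  revert p; induction u as [|a u IH]; intros p; simpl.
  - split.
    + intros H k Hk. destruct k; [|lia]. simpl. destruct p; simpl in *; auto; intros; discriminate.
    + intros H. specialize (H 0%nat ltac:(lia)). simpl in H. destruct p; auto.
  - rewrite andb_true_iff, IH. split.
    + intros [H1 H2] k Hk. destruct k.
      * simpl. destruct p; simpl in *; intros E; [discriminate|auto].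
      * apply H2. lia.
    + intros H. split.
      * specialize (H 0%nat ltac:(lia)). simpl in H. destruct p; auto.
      * intros k Hk. apply (H (S k)). lia.
Qed.

Lemma cgood_okc c u : cgood (c :: u) <-> okc c u c = true.
Proof. rewrite okc_nth. unfold cgood, ext. simpl. tauto. Qed.

Definition GL (m : nat) : list (list bool) :=
  map (cons true) (W (m-1) true true) ++ map (cons false) (W (m-1) false false).

Lemma GL_spec m w : (1 <= m)%nat -> In w (GL m) <-> length w = m /\ cgood w.
Proof.
  intros Hm. unfold GL. rewrite in_app_iff, !in_map_iff. split.
  - intros [[u [<- Hu]]|[u [<- Hu]]]; apply W_spec in Hu; destruct Hu as [H1 H2];
      (split; [simpl; lia| apply cgood_okc; auto]).
  - intros [Hl Hg]. destruct w as [|c u]; simpl in Hl; [lia|].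
    apply cgood_okc in Hg. destruct c; [left|right]; exists u; split; auto; apply W_spec; split; auto; lia.
Qed.

Lemma GL_nodup m : NoDup (GL m).
Proof.
  unfold GL. apply NoDup_app.
  - apply NoDup_map_inj; [intros x y H; inversion H; auto|apply W_nodup].
  - apply NoDup_map_inj; [intros x y H; inversion H; auto|apply W_nodup].
  - intros x H1 H2. apply in_map_iff in H1, H2. destruct H1 as [u [<- _]], H2 as [v [E _]]. discriminate.
Qed.

Lemma lucas_fib m : (1 <= m)%nat -> lucas m = Z.of_nat (fib (m+1) + fib (m-1)).
Proof.
  intros Hm.
  assert (H : forall n, lucas (S n) = Z.of_nat (fib (S n + 1) + fib n) /\
                        lucas (S (S n)) = Z.of_nat (fib (S (S n) + 1) + fib (S n))).
  { induction n. split; reflexivity.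
    destruct IHn as [H1 H2]. split; auto.
    change (lucas (S (S (S n)))) with (lucas (S (S n)) + lucas (S n))%Z. rewrite H1, H2.
    replace (S (S (S n)) + 1)%nat with (S (S (S (S n)))) by lia.
    replace (S (S n) + 1)%nat with (S (S (S n))) by lia.
    replace (S n + 1)%nat with (S (S n)) by lia.
    change (fib (S (S (S (S n))))) with (fib (S (S (S n))) + fib (S (S n)))%nat.
    change (fib (S (S n))) with (fib (S n) + fib n)%nat. lia. }
  destruct m; [lia|]. replace (S m - 1)%nat with m by lia. apply H.
Qed.

Lemma GL_len m : (1 <= m)%nat -> Z.of_nat (length (GL m)) = lucas m.
Proof.
  intros Hm. unfold GL. rewrite length_app, !length_map, !W_len, lucas_fib by auto.
  f_equal. replace (m - 1 + 1 + 1)%nat with (m+1)%nat by lia. replace (m-1+0+0)%nat with (m-1)%nat by lia. auto.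
Qed.

Open Scope R_scope.

Definition FixL (m:nat) : list R := map xw (GL m).

Lemma FixL_spec m x : (1 <= m)%nat -> In x (FixL m) <-> (1 <= x <= 3 /\ iter m fmap x = x).
Proof.
  intros Hm. unfold FixL. rewrite in_map_iff. split.
  - intros [w [<- Hw]]. apply GL_spec in Hw; auto. destruct Hw as [Hl Hg].
    destruct (K3 w ltac:(lia) Hg) as [H1 [H2 _]]. rewrite Hl in H2. auto.
  - intros [Hx Hf]. exists (itin m x). split.
    + symmetry. apply xw_unique.
      * destruct (Aw_bound (itin m x)) as [_ HA].
        assert (Hg := K1 m x Hm Hx Hf).
        specialize (HA (good_has_true (itin m x) ltac:(rewrite itin_length; lia) Hg)).
        intro E; rewrite E in HA; rewrite Rabs_R1 in HA; lra.
      * rewrite <- Hf at 2. rewrite hw_itin. auto.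
    + apply GL_spec; auto. split; [apply itin_length|apply K1; auto].
Qed.

Lemma FixL_nodup m : (1 <= m)%nat -> NoDup (FixL m).
Proof.
  intros Hm. unfold FixL. apply NoDup_map_NoDup_ForallPairs; [|apply GL_nodup].
  intros w v Hw Hv E. apply GL_spec in Hw, Hv; auto.
  destruct Hw as [Hw1 Hw2], Hv as [Hv1 Hv2].
  destruct (K3 w ltac:(lia) Hw2) as [_ [_ E1]]. destruct (K3 v ltac:(lia) Hv2) as [_ [_ E2]].
  rewrite <- E1, <- E2. rewrite Hw1, Hv1, E. auto.
Qed.

Theorem partA : forall m : nat, (1 <= m)%nat ->
     exists l : list R, NoDup l /\
       (forall x, In x l <-> (1 <= x <= 3 /\ iter m fmap x = x)) /\
       Z.of_nat (length l) = lucas m.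
Proof.
  intros m Hm. exists (FixL m). split; [apply FixL_nodup; auto|]. split.
  - intros; apply FixL_spec; auto.
  - unfold FixL. rewrite length_map. apply GL_len; auto.
Qed.

Open Scope nat_scope.
Open Scope R_scope.

Definition isper (d:nat) (x:R) : Prop :=
  (1 <= d)%nat /\ iter d fmap x = x /\ forall k, (1 <= k < d)%nat -> iter k fmap x <> x.

Lemma iter_mul p x k : iter p fmap x = x -> iter (k * p) fmap x = x.
Proof.
  intros H; induction k; simpl; auto. rewrite iter_add, IHk; auto.
Qed.

Lemma iter_mod p x n : (1 <= p)%nat -> iter p fmap x = x -> iter n fmap x = iter (n mod p) fmap x.
Proof.
  intros Hp H. rewrite (Nat.div_mod n p) at 1 by lia.
  rewrite Nat.add_comm, iter_add, Nat.mul_comm, iter_mul; auto.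
Qed.

Lemma isper_div p x m : isper p x -> iter m fmap x = x -> Nat.divide p m.
Proof.
  intros [Hp [H1 H2]] Hm. apply Nat.mod_divide; [lia|].
  rewrite (iter_mod p x m) in Hm by auto.
  destruct (Nat.eq_dec (m mod p) 0); auto. exfalso.
  apply (H2 (m mod p)); auto. pose proof (Nat.mod_upper_bound m p); lia.
Qed.

Lemma isper_unique p q x : isper p x -> isper q x -> p = q.
Proof.
  intros [Hp [Hp1 Hp2]] [Hq [Hq1 Hq2]].
  destruct (Nat.lt_trichotomy p q) as [H|[H|H]]; auto; exfalso.
  - apply (Hq2 p); auto; lia.
  - apply (Hp2 q); auto; lia.
Qed.

Lemma exists_isper m x : (1 <= m)%nat -> iter m fmap x = x -> exists p, isper p x /\ (p <= m)%nat.
Proof.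
  intros Hm Hx.
  assert (H : forall n, (forall k, (1 <= k <= n)%nat -> iter k fmap x <> x) \/ exists p, isper p x /\ (p <= n)%nat).
  { induction n.
    - left; intros; lia.
    - destruct IHn as [H|H].
      + destruct (Req_EM_T (iter (S n) fmap x) x) as [E|E].
        * right. exists (S n). split; auto. split; [lia|split; auto]. intros k Hk; apply H; lia.
        * left. intros k Hk. destruct (Nat.eq_dec k (S n)); [subst; auto|apply H; lia].
      + right. destruct H as [p [H1 H2]]. exists p; split; auto. }
  destruct (H m) as [H'|H']; auto. exfalso; apply (H' m); auto.
Qed.

Lemma isper_shift p x k : isper p x -> isper p (iter k fmap x).
Proof.
  intros [Hp [H1 H2]]. split; auto. split.
  - rewrite <- iter_add, Nat.add_comm, iter_add, H1; auto.
  - intros j Hj E.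
    set (r := (k mod p)%nat).
    assert (Hr : (r < p)%nat) by (apply Nat.mod_upper_bound; lia).
    assert (E3 : iter j fmap (iter (p - r + k) fmap x) = iter (p - r + k) fmap x).
    { rewrite iter_add. rewrite <- iter_add. rewrite Nat.add_comm. rewrite iter_add. rewrite E. auto. }
    assert (E4 : iter (p - r + k) fmap x = x).
    { rewrite (iter_mod p x) by auto.
      replace (p - r + k)%nat with (p + k / p * p)%nat.
      2:{ unfold r. pose proof (Nat.div_mod k p ltac:(lia)). lia. }
      rewrite Nat.mod_add by lia. rewrite Nat.mod_same by lia. simpl. auto. }
    rewrite E4 in E3. apply (H2 j); auto.
Qed.

Definition OL (p:nat) (x:R) : list R := map (fun k => iter k fmap x) (seq 0 p).

Lemma OL_in p x y : In y (OL p x) <-> exists k, (k < p)%nat /\ y = iter k fmap x.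
Proof.
  unfold OL. rewrite in_map_iff. split.
  - intros [k [<- Hk]]. apply in_seq in Hk. exists k; split; auto; lia.
  - intros [k [Hk ->]]. exists k; split; auto. apply in_seq; lia.
Qed.

Lemma OL_orbit p x y : isper p x -> (In y (OL p x) <-> in_orbit fmap x y).
Proof.
  intros Hp. rewrite OL_in. unfold in_orbit. split.
  - intros [k [_ ->]]. exists k; auto.
  - intros [k ->]. destruct Hp as [Hp [H1 _]]. exists (k mod p)%nat. split.
    + apply Nat.mod_upper_bound; lia.
    + apply iter_mod; auto.
Qed.

Lemma OL_nodup p x : isper p x -> NoDup (OL p x).
Proof.
  intros Hp. unfold OL. apply NoDup_map_NoDup_ForallPairs; [|apply seq_NoDup].
  assert (K : forall i j, (i < j < p)%nat -> iter i fmap x <> iter j fmap x).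
  { intros i j Hij E. destruct Hp as [Hp [H1 H2]].
    assert (E2 : iter (p - j) fmap (iter i fmap x) = iter (p - j) fmap (iter j fmap x)) by (rewrite E; auto).
    rewrite <- !iter_add in E2. replace (p - j + j)%nat with p in E2 by lia. rewrite H1 in E2.
    apply (H2 (p - j + i)%nat); auto; lia. }
  intros i j Hi Hj E. apply in_seq in Hi, Hj.
  destruct (Nat.lt_trichotomy i j) as [H|[H|H]]; auto; exfalso.
  - apply (K i j); auto; lia.
  - apply (K j i); auto; lia.
Qed.

Lemma OL_length p x : length (OL p x) = p.
Proof. unfold OL. rewrite length_map, length_seq. auto. Qed.

Lemma min_period_iff m x : (1 <= m)%nat -> (min_period fmap m x <-> isper m x).
Proof.
  intros Hm. split.
  - intros [Hf [l [Hnd [Hl Hin]]]].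
    destruct (exists_isper m x Hm Hf) as [p [Hp _]].
    assert (P : Permutation l (OL p x)).
    { apply NoDup_Permutation; auto. apply OL_nodup; auto.
      intros y. rewrite Hin, OL_orbit; auto. tauto. }
    apply Permutation_length in P. rewrite OL_length in P. subst. auto.
  - intros Hp. split; [apply Hp|]. exists (OL m x). split; [apply OL_nodup; auto|].
    split; [apply OL_length|]. intros y; apply OL_orbit; auto.
Qed.

Lemma orbit_shift p x k y : isper p x -> (in_orbit fmap (iter k fmap x) y <-> in_orbit fmap x y).
Proof.
  intros Hp. rewrite <- (OL_orbit p x) by auto. rewrite <- (OL_orbit p (iter k fmap x)) by (apply isper_shift; auto).
  rewrite !OL_in. destruct Hp as [Hp [H1 H2]]. split.
  - intros [j [Hj ->]]. rewrite <- iter_add. exists ((j + k) mod p)%nat. split; [apply Nat.mod_upper_bound; lia|].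
    apply iter_mod; auto.
  - intros [j [Hj ->]]. set (r := (k mod p)%nat).
    assert (Hr : (r < p)%nat) by (apply Nat.mod_upper_bound; lia).
    exists ((j + (p - r)) mod p)%nat. split; [apply Nat.mod_upper_bound; lia|].
    assert (Hs : iter p fmap (iter k fmap x) = iter k fmap x) by (apply (isper_shift p x k (conj Hp (conj H1 H2)))).
    rewrite <- (iter_mod p (iter k fmap x) (j + (p - r))) by auto. rewrite <- iter_add.
    rewrite (iter_mod p x (j + (p - r) + k)) by auto.
    rewrite (iter_mod p x j) by auto. f_equal.
    replace (j + (p - r) + k)%nat with (j + (k / p + 1) * p)%nat.
    2:{ unfold r. pose proof (Nat.div_mod k p ltac:(lia)). lia. }
    rewrite Nat.mod_add by lia. auto.
Qed.

Open Scope nat_scope.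

Definition divs (m:nat) : list nat := filter (fun d => (m mod d =? 0)%nat) (seq 1 m).
Definition sumZ (l : list Z) : Z := fold_right Z.add 0%Z l.

Lemma divs_spec m d : In d (divs m) <-> (1 <= d <= m)%nat /\ m mod d = 0%nat.
Proof.
  unfold divs. rewrite filter_In, in_seq, Nat.eqb_eq. split; intros [H1 H2]; split; auto; lia.
Qed.

Lemma divs_nodup m : NoDup (divs m).
Proof. unfold divs. apply NoDup_filter, seq_NoDup. Qed.

Lemma sumZ_app l1 l2 : sumZ (l1 ++ l2) = (sumZ l1 + sumZ l2)%Z.
Proof. induction l1; simpl; auto. rewrite IHl1; lia. Qed.

Lemma sumZ_perm l1 l2 : Permutation l1 l2 -> sumZ l1 = sumZ l2.
Proof. induction 1; simpl; lia. Qed.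

Lemma sumZ_ext {A} (f g : A -> Z) l : (forall x, In x l -> f x = g x) -> sumZ (map f l) = sumZ (map g l).
Proof. induction l; simpl; auto. intros H. rewrite H by auto. rewrite IHl; auto. Qed.

Lemma sumZ_nat {A} (f : A -> nat) l : Z.of_nat (fold_right plus 0%nat (map f l)) = sumZ (map (fun x => Z.of_nat (f x)) l).
Proof. induction l; simpl; auto. rewrite Nat2Z.inj_add, IHl. auto. Qed.

Lemma count_partition {A} (l : list A) (D : list nat) (P : nat -> A -> bool) :
  (forall x, In x l -> length (filter (fun d => P d x) D) = 1%nat) ->
  length l = fold_right plus 0%nat (map (fun d => length (filter (P d) l)) D).
Proof.
  induction l as [|x l IH]; intros H.
  - clear H. simpl. induction D; simpl; auto.
  - assert (E : forall D', fold_right plus 0%nat (map (fun d => length (filter (P d) (x :: l))) D') =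
       (length (filter (fun d => P d x) D') + fold_right plus 0%nat (map (fun d => length (filter (P d) l)) D'))%nat).
    { induction D' as [|d D' IHD]; [reflexivity|]. cbn [map fold_right]. rewrite IHD. cbn [filter]. destruct (P d x); simpl; lia. }
    rewrite E, H by (left; auto). simpl. rewrite IH; auto. intros; apply H; right; auto.
Qed.

Open Scope nat_scope.
Open Scope R_scope.

Definition eqRb (x y : R) : bool := if Req_EM_T x y then true else false.

Definition Qb (d:nat) (x:R) : bool :=
  eqRb (iter d fmap x) x && forallb (fun k => negb (eqRb (iter k fmap x) x)) (seq 1 (d-1)).

Lemma Qb_spec d x : (1 <= d)%nat -> Qb d x = true <-> isper d x.
Proof.
  intros Hd. unfold Qb, isper, eqRb. rewrite andb_true_iff, forallb_forall. split.
  - intros [H1 H2]. destruct Req_EM_T; [|discriminate]. split; auto. split; auto.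
    intros k Hk E. specialize (H2 k ltac:(apply in_seq; lia)). destruct Req_EM_T; [discriminate|auto].
  - intros [_ [H1 H2]]. destruct Req_EM_T; [|contradiction]. split; auto.
    intros k Hk. apply in_seq in Hk. destruct Req_EM_T; auto. exfalso; apply (H2 k); auto; lia.
Qed.

Definition MP (d:nat) : list R := filter (Qb d) (FixL d).

Lemma MP_spec d x : (1 <= d)%nat -> In x (MP d) <-> (1 <= x <= 3 /\ isper d x).
Proof.
  intros Hd. unfold MP. rewrite filter_In, FixL_spec, Qb_spec by auto. split.
  - intros [[H1 H2] H3]; auto.
  - intros [H1 H3]; split; auto. split; auto. apply H3.
Qed.

Lemma MP_nodup d : (1 <= d)%nat -> NoDup (MP d).
Proof. intros; apply NoDup_filter, FixL_nodup; auto. Qed.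

Lemma lucas_MP m : (1 <= m)%nat -> lucas m = sumZ (map (fun d => Z.of_nat (length (MP d))) (divs m)).
Proof.
  intros Hm. rewrite <- GL_len by auto. fold (FixL m). replace (length (GL m)) with (length (FixL m)) by (unfold FixL; rewrite length_map; auto).
  rewrite (count_partition (FixL m) (divs m) Qb).
  - rewrite sumZ_nat. apply sumZ_ext. intros d Hd. apply divs_spec in Hd. f_equal.
    apply Permutation_length. apply NoDup_Permutation.
    + apply NoDup_filter, FixL_nodup; auto.
    + apply MP_nodup; lia.
    + intros x. rewrite filter_In, MP_spec, FixL_spec, Qb_spec by lia. split.
      * intros [[H1 _] H3]; auto.
      * intros [H1 H3]; split; auto; split; auto.
        destruct H3 as [_ [H3 _]]. destruct Hd as [Hd1 Hd]. apply Nat.mod_divide in Hd; [|lia].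
        destruct Hd as [q ->]. apply iter_mul; auto.
  - intros x Hx. apply FixL_spec in Hx; auto. destruct Hx as [Hx Hf].
    destruct (exists_isper m x Hm Hf) as [p [Hp Hpm]].
    assert (P : Permutation (filter (fun d => Qb d x) (divs m)) [p]).
    { apply NoDup_Permutation.
      - apply NoDup_filter, divs_nodup.
      - repeat constructor; auto.
      - intros d. rewrite filter_In, divs_spec. simpl. split.
        + intros [[H1 _] H2]. apply Qb_spec in H2; [|lia]. left. apply (isper_unique p d x); auto.
        + intros [<-|[]]. assert (H1 := Hp). destruct H1 as [H1 _]. split; [split; [lia|]|apply Qb_spec; auto].
          apply Nat.mod_divide; [lia|]. apply (isper_div p x m); auto. }
    apply Permutation_length in P. auto.
Qed.

Open Scope nat_scope.
Open Scope R_scope.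

Definition ismin (m:nat) (x:R) : bool :=
  forallb (fun k => if Rle_dec x (iter k fmap x) then true else false) (seq 0 m).

Lemma ismin_spec m x : ismin m x = true <-> forall k, (k < m)%nat -> x <= iter k fmap x.
Proof.
  unfold ismin. rewrite forallb_forall. split.
  - intros H k Hk. specialize (H k ltac:(apply in_seq; lia)). destruct Rle_dec; auto; discriminate.
  - intros H k Hk. apply in_seq in Hk. destruct Rle_dec; auto. exfalso; apply n, H; lia.
Qed.

Definition reps (m:nat) : list R := filter (ismin m) (MP m).

Lemma same_orbit_min m a b : isper m a -> isper m b ->
  (forall k, (k < m)%nat -> a <= iter k fmap a) -> (forall k, (k < m)%nat -> b <= iter k fmap b) ->
  in_orbit fmap a b -> a = b.
Proof.
  intros Ha Hb Ma Mb Hab.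
  apply (OL_orbit m a b Ha) in Hab. apply OL_in in Hab. destruct Hab as [k [Hk Eb]].
  assert (Hba : in_orbit fmap b a).
  { rewrite Eb. apply (orbit_shift m a k a Ha). exists 0%nat; auto. }
  apply (OL_orbit m b a Hb) in Hba. apply OL_in in Hba. destruct Hba as [j [Hj Ea]].
  specialize (Ma k Hk). specialize (Mb j Hj). rewrite <- Eb in Ma. rewrite <- Ea in Mb. lra.
Qed.

Lemma min_exists (l : list R) : l <> [] -> exists a, In a l /\ forall b, In b l -> a <= b.
Proof.
  induction l as [|x l IH]; intros H; [congruence|].
  destruct l as [|y l'].
  - exists x. split; [left; auto|]. intros b [<-|[]]; lra.
  - destruct (IH ltac:(discriminate)) as [a [Ha Hm]].
    destruct (Rle_dec x a).
    + exists x. split; [left; auto|]. intros b [<-|Hb]; [lra|]. specialize (Hm b Hb); lra.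
    + exists a. split; [right; auto|]. intros b [<-|Hb]; [lra|]. auto.
Qed.

Lemma NoDup_flat_map_gen {A B} (F : A -> list B) (L : list A) :
  (forall a, In a L -> NoDup (F a)) ->
  (forall a b y, In a L -> In b L -> In y (F a) -> In y (F b) -> a = b) ->
  NoDup L -> NoDup (flat_map F L).
Proof.
  intros H1 H2 HL. induction HL as [|a L Ha HL IH]; simpl; [constructor|].
  apply NoDup_app.
  - apply H1; left; auto.
  - apply IH. intros; apply H1; right; auto. intros; eapply H2; eauto; right; auto.
  - intros y Hy Hy'. apply in_flat_map in Hy'. destruct Hy' as [b [Hb Hyb]].
    assert (a = b) by (eapply H2; eauto; [left; auto|right; auto]). subst; contradiction.
Qed.

Lemma length_flat_map_const {A B} (F : A -> list B) (L : list A) k :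
  (forall a, In a L -> length (F a) = k) -> length (flat_map F L) = (k * length L)%nat.
Proof.
  induction L; intros H; simpl; [lia|]. rewrite length_app, H by (left; auto). rewrite IHL; [lia|].
  intros; apply H; right; auto.
Qed.

Lemma reps_in m a : (1 <= m)%nat -> In a (reps m) <->
  (1 <= a <= 3 /\ isper m a /\ forall k, (k < m)%nat -> a <= iter k fmap a).
Proof.
  intros Hm. unfold reps. rewrite filter_In, MP_spec, ismin_spec by auto. tauto.
Qed.

Lemma reps_count m : (1 <= m)%nat -> length (MP m) = (m * length (reps m))%nat.
Proof.
  intros Hm. rewrite <- (length_flat_map_const (OL m) (reps m) m).
  2:{ intros; apply OL_length. }
  apply Permutation_length. apply NoDup_Permutation.
  - apply MP_nodup; auto.
  - apply NoDup_flat_map_gen.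
    + intros a Ha. apply reps_in in Ha; auto. apply OL_nodup; tauto.
    + intros a b y Ha Hb Hya Hyb. apply reps_in in Ha, Hb; auto.
      destruct Ha as [_ [Pa Ma]], Hb as [_ [Pb Mb]].
      apply (same_orbit_min m a b Pa Pb Ma Mb).
      apply OL_in in Hya, Hyb. destruct Hya as [i [Hi Ei]], Hyb as [j [Hj Ej]].
      apply (orbit_shift m a i b Pa). rewrite <- Ei, Ej. apply (orbit_shift m b j b Pb). exists 0%nat; auto.
    + unfold reps. apply NoDup_filter, MP_nodup; auto.
  - intros y. rewrite in_flat_map, MP_spec by auto. split.
    + intros [Hy Py].
      destruct (min_exists (OL m y)) as [a [Ha Ma]].
      { intro E. pose proof (OL_length m y) as L. rewrite E in L. simpl in L. lia. }
      apply OL_in in Ha. destruct Ha as [k [Hk Ea]].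
      assert (Pa : isper m a) by (rewrite Ea; apply isper_shift; auto).
      exists a. split.
      * apply reps_in; auto. split; [rewrite Ea; apply iter_range; auto|]. split; auto.
        intros j Hj. apply Ma. apply (OL_orbit m y); auto.
        rewrite Ea. rewrite <- (orbit_shift m y k _ Py). exists j; auto.
      * apply (OL_orbit m a y Pa). rewrite Ea. apply (orbit_shift m y k y Py). exists 0%nat; auto.
    + intros [a [Ha Hya]]. apply reps_in in Ha; auto. destruct Ha as [Ha [Pa _]].
      apply OL_in in Hya. destruct Hya as [k [_ ->]]. split; [apply iter_range; auto|apply isper_shift; auto].
Qed.

Theorem partB_gen m : (1 <= m)%nat -> Phi1 m = Z.of_nat (length (MP m)) ->
     exists reps : list R,
       (forall a, In a reps -> 1 <= a <= 3 /\ min_period fmap m a) /\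
       (forall i j, (i < length reps)%nat -> (j < length reps)%nat -> i <> j ->
          ~ (forall y, in_orbit fmap (nth i reps 0) y <-> in_orbit fmap (nth j reps 0) y)) /\
       (forall x, 1 <= x <= 3 -> min_period fmap m x ->
          exists a, In a reps /\ (forall y, in_orbit fmap a y <-> in_orbit fmap x y)) /\
       INR (length reps) = Phi1_over m.
Proof.
  intros Hm HPhi. exists (reps m). split; [|split; [|split]].
  - intros a Ha. apply reps_in in Ha; auto. rewrite min_period_iff by auto. tauto.
  - intros i j Hi Hj Hij Heq.
    assert (Hnd : NoDup (reps m)) by (apply NoDup_filter, MP_nodup; auto).
    apply Hij. apply (proj1 (NoDup_nth (reps m) 0) Hnd i j Hi Hj).
    assert (Ia := nth_In (reps m) 0 Hi). assert (Ib := nth_In (reps m) 0 Hj).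
    apply reps_in in Ia, Ib; auto. destruct Ia as [_ [Pa Ma]], Ib as [_ [Pb Mb]].
    apply (same_orbit_min m _ _ Pa Pb Ma Mb). apply Heq. exists 0%nat; auto.
  - intros x Hx Hmp. apply min_period_iff in Hmp; auto.
    assert (Hin : In x (MP m)) by (apply MP_spec; auto).
    destruct (min_exists (OL m x)) as [a [Ha Ma]].
    { intro E. pose proof (OL_length m x) as L. rewrite E in L. simpl in L. lia. }
    apply OL_in in Ha. destruct Ha as [k [Hk Ea]].
    assert (Pa : isper m a) by (rewrite Ea; apply isper_shift; auto).
    exists a. split.
    + apply reps_in; auto. split; [rewrite Ea; apply iter_range; auto|]. split; auto.
      intros j Hj. apply Ma. apply (OL_orbit m x); auto.
      rewrite Ea. rewrite <- (orbit_shift m x k _ Hmp). exists j; auto.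
    + intros y. rewrite Ea. apply (orbit_shift m x k y Hmp).
  - unfold Phi1_over. rewrite HPhi, reps_count by auto.
    rewrite <- INR_IZR_INZ, mult_INR. field. apply not_0_INR; lia.
Qed.

Open Scope nat_scope.
Open Scope Z_scope.

Definition Prime (p : nat) : Prop := (1 < p)%nat /\ forall d, (1 < d < p)%nat -> ~ Nat.divide d p.

Lemma mod0_divide a b : (0 < b)%nat -> (a mod b = 0 <-> Nat.divide b a)%nat.
Proof. intros; apply Nat.mod_divide; lia. Qed.

Lemma is_primeb_spec p : is_primeb p = true <-> Prime p.
Proof.
  unfold is_primeb, Prime. rewrite andb_true_iff, Nat.ltb_lt, forallb_forall. split.
  - intros [H1 H2]; split; auto. intros d Hd Hdiv.
    specialize (H2 d ltac:(apply in_seq; lia)). apply negb_true_iff, Nat.eqb_neq in H2.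
    apply H2, mod0_divide; auto; lia.
  - intros [H1 H2]; split; auto. intros d Hd. apply in_seq in Hd.
    apply negb_true_iff, Nat.eqb_neq. intros E. apply (H2 d); [lia|]. apply mod0_divide; auto; lia.
Qed.

Lemma nat_Z_divide a b : Nat.divide a b <-> Z.divide (Z.of_nat a) (Z.of_nat b).
Proof.
  split.
  - intros [q ->]. exists (Z.of_nat q). lia.
  - intros [k Hk]. destruct (Nat.eq_dec a 0) as [->|Ha].
    + simpl in Hk. exists 0%nat. lia.
    + assert (0 <= k)%Z by nia. exists (Z.to_nat k). lia.
Qed.

Lemma Prime_Z p : Prime p -> prime (Z.of_nat p).
Proof.
  intros [H1 H2]. apply prime_alt. split; [lia|]. intros n Hn Hd.
  apply (H2 (Z.to_nat n)); [lia|]. apply nat_Z_divide. rewrite Z2Nat.id by lia. auto.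
Qed.

Lemma euclid p a b : Prime p -> Nat.divide p (a * b) -> Nat.divide p a \/ Nat.divide p b.
Proof.
  intros Hp H. apply nat_Z_divide in H. rewrite Nat2Z.inj_mul in H.
  apply prime_mult in H; [|apply Prime_Z; auto]. destruct H; [left|right]; apply nat_Z_divide; auto.
Qed.

Lemma Prime_ge2 p : Prime p -> (2 <= p)%nat.
Proof. intros [H _]; lia. Qed.

Lemma gauss_prime p e k : Prime p -> ~ Nat.divide p e -> Nat.divide p (e * k) -> Nat.divide p k.
Proof. intros Hp He H. destruct (euclid p e k Hp H); auto; contradiction. Qed.

Lemma sq_div_prime q p e : Prime q -> Prime p -> q <> p -> Nat.divide (q * q) (p * e) -> Nat.divide (q * q) e.
Proof.
  intros Hq Hp Hne H.
  assert (Hqp : ~ Nat.divide q p).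
  { intros Hd. destruct Hp as [Hp1 Hp2]. destruct (Nat.eq_dec q 1) as [->|H1].
    - destruct Hq; lia.
    - destruct (Nat.eq_dec q p) as [|Hqp]; [contradiction|].
      apply (Hp2 q); auto. split; [destruct Hq; lia|]. apply Nat.divide_pos_le in Hd; lia. }
  destruct H as [t Ht].
  assert (H1 : Nat.divide q e).
  { apply (gauss_prime q p e Hq Hqp). exists (t * q)%nat. lia. }
  destruct H1 as [e1 ->].
  assert (H2 : Nat.divide q (p * e1)).
  { assert (Hq0 : q <> 0%nat) by (destruct Hq; lia).
    exists t. apply (Nat.mul_cancel_r _ _ q Hq0). lia. }
  apply (gauss_prime q p e1 Hq Hqp) in H2. destruct H2 as [e2 ->]. exists e2. lia.
Qed.

Lemma PD_spec n q : (1 <= n)%nat -> In q (prime_divisors n) <-> Prime q /\ Nat.divide q n.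
Proof.
  intros Hn. unfold prime_divisors. rewrite filter_In, in_seq, andb_true_iff, is_primeb_spec, Nat.eqb_eq.
  split.
  - intros [H1 [H2 H3]]. split; auto. apply mod0_divide; auto; lia.
  - intros [H1 H2]. assert (Hq := Prime_ge2 q H1). split; [|split; auto; apply mod0_divide; auto; lia].
    apply Nat.divide_pos_le in H2; lia.
Qed.

Lemma PD_nodup n : NoDup (prime_divisors n).
Proof. unfold prime_divisors. apply NoDup_filter, seq_NoDup. Qed.

Lemma SF_spec n : (1 <= n)%nat -> squarefreeb n = true <->
  forall q, Prime q -> Nat.divide q n -> ~ Nat.divide (q * q) n.
Proof.
  intros Hn. unfold squarefreeb. rewrite forallb_forall. split.
  - intros H q Hq Hd Hd2. specialize (H q (proj2 (PD_spec n q Hn) (conj Hq Hd))).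
    apply negb_true_iff, Nat.eqb_neq in H. apply H. apply mod0_divide; auto.
    assert (Hq2 := Prime_ge2 q Hq). nia.
  - intros H q Hq. apply PD_spec in Hq; auto. destruct Hq as [Hq Hd].
    apply negb_true_iff, Nat.eqb_neq. intros E. apply (H q Hq Hd).
    apply mod0_divide; auto. assert (Hq2 := Prime_ge2 q Hq). nia.
Qed.

Lemma moebius_sq p n : Prime p -> (1 <= n)%nat -> Nat.divide (p * p) n -> moebius n = 0%Z.
Proof.
  intros Hp Hn Hd. unfold moebius. destruct (squarefreeb n) eqn:E; auto.
  pose proof (proj1 (SF_spec n Hn) E) as E2. exfalso. apply (E2 p Hp); auto.
  destruct Hd as [t ->]. exists (t * p)%nat. lia.
Qed.

Lemma prime_div_prime' q p : Prime q -> Prime p -> Nat.divide q p -> q = p.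
Proof.
  intros Hq [Hp1 Hp2] Hd. destruct (Nat.eq_dec q p); auto. exfalso.
  assert (Hq2 := Prime_ge2 q Hq). assert (Hle := Nat.divide_pos_le q p ltac:(lia) Hd).
  apply (Hp2 q); auto. lia.
Qed.

Lemma moebius_pe p e : Prime p -> (1 <= e)%nat -> ~ Nat.divide p e -> moebius (p * e) = (- moebius e)%Z.
Proof.
  intros Hp He Hpe. assert (Hp2 := Prime_ge2 p Hp).
  assert (Hpe1 : (1 <= p * e)%nat) by nia.
  assert (P : Permutation (prime_divisors (p * e)) (p :: prime_divisors e)).
  { apply NoDup_Permutation; [apply PD_nodup| |].
    - constructor; [|apply PD_nodup]. rewrite PD_spec by auto. tauto.
    - intros q. simpl. rewrite !PD_spec by auto. split.
      + intros [Hq Hd]. destruct (euclid q p e Hq Hd) as [H|H].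
        * left. symmetry. apply prime_div_prime'; auto.
        * right; auto.
      + intros [<-|[Hq Hd]]; split; auto.
        * exists e. lia.
        * destruct Hd as [t ->]. exists (p * t)%nat. lia. }
  assert (S : squarefreeb (p * e) = squarefreeb e).
  { apply eq_true_iff_eq. rewrite !SF_spec by auto. split.
    - intros H q Hq Hd Hd2. apply (H q Hq).
      + destruct Hd as [t ->]. exists (p * t)%nat. lia.
      + destruct Hd2 as [t ->]. exists (p * t)%nat. lia.
    - intros H q Hq Hd Hd2. destruct (Nat.eq_dec q p) as [->|Hne].
      + apply Hpe. destruct Hd2 as [t Ht]. exists t. apply (Nat.mul_cancel_l _ _ p); lia.
      + apply (H q Hq).
        * destruct (euclid q p e Hq Hd) as [H1|H1]; auto.
          exfalso; apply Hne; apply prime_div_prime'; auto.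
        * apply (sq_div_prime q p e); auto. }
  unfold moebius. rewrite S. destruct (squarefreeb e); auto.
  rewrite (Permutation_length P). simpl length. rewrite Nat2Z.inj_succ, Z.pow_succ_r by lia. lia.
Qed.

Open Scope nat_scope.
Open Scope Z_scope.

Lemma divs_spec' n d : (1 <= n)%nat -> In d (divs n) <-> (1 <= d)%nat /\ Nat.divide d n.
Proof.
  intros Hn. rewrite divs_spec. split.
  - intros [H1 H2]. split; [lia|]. apply mod0_divide; auto; lia.
  - intros [H1 H2]. split; [split; auto; apply Nat.divide_pos_le; auto; lia|]. apply mod0_divide; auto; lia.
Qed.

Lemma forallb_false {A} (f : A -> bool) l : forallb f l = false -> exists x, In x l /\ f x = false.
Proof.
  induction l as [|a l IH]; simpl; [discriminate|]. intros H.
  destruct (f a) eqn:E; simpl in H.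
  - destruct (IH H) as [x [H1 H2]]; exists x; auto.
  - exists a; auto.
Qed.

Lemma prime_factor_exists n : (1 < n)%nat -> exists p, Prime p /\ Nat.divide p n.
Proof.
  induction n as [n IH] using lt_wf_ind. intros Hn.
  destruct (is_primeb n) eqn:E.
  - exists n. split; [apply is_primeb_spec; auto|apply Nat.divide_refl].
  - unfold is_primeb in E. apply andb_false_iff in E. destruct E as [E|E].
    + apply Nat.ltb_ge in E; lia.
    + apply forallb_false in E. destruct E as [d [Hd Hf]]. apply in_seq in Hd.
      apply negb_false_iff, Nat.eqb_eq in Hf. apply mod0_divide in Hf; [|lia].
      destruct (IH d ltac:(lia) ltac:(lia)) as [p [Hp Hpd]]. exists p. split; auto.
      apply Nat.divide_trans with d; auto.
Qed.

Lemma sumZ_filter {A} (F : A -> Z) (P : A -> bool) l :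
  sumZ (map F l) = (sumZ (map F (filter P l)) + sumZ (map F (filter (fun x => negb (P x)) l)))%Z.
Proof. induction l; simpl; auto. destruct (P a); simpl; rewrite IHl; lia. Qed.

Lemma sumZ_zero {A} (F : A -> Z) l : (forall x, In x l -> F x = 0%Z) -> sumZ (map F l) = 0%Z.
Proof. induction l; simpl; auto. intros H. rewrite H, IHl; auto. Qed.

Lemma sumZ_opp {A} (F : A -> Z) l : sumZ (map (fun x => - F x)%Z l) = (- sumZ (map F l))%Z.
Proof. induction l; simpl; auto. rewrite IHl; lia. Qed.

Lemma moebius_sum n : (1 <= n)%nat -> sumZ (map moebius (divs n)) = if (n =? 1)%nat then 1%Z else 0%Z.
Proof.
  intros Hn. destruct (Nat.eqb_spec n 1) as [->|Hn1]; [reflexivity|].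
  destruct (prime_factor_exists n ltac:(lia)) as [p [Hp Hpn]].
  assert (Hp2 := Prime_ge2 p Hp).
  set (dp := fun d => (d mod p =? 0)%nat).
  set (dp2 := fun d => (d mod (p * p) =? 0)%nat).
  assert (Edp : forall d, dp d = true <-> Nat.divide p d) by (intros; unfold dp; rewrite Nat.eqb_eq; apply mod0_divide; lia).
  assert (Edp2 : forall d, dp2 d = true <-> Nat.divide (p*p) d) by (intros; unfold dp2; rewrite Nat.eqb_eq; apply mod0_divide; nia).
  set (A := filter (fun d => negb (dp d)) (divs n)).
  set (B := filter dp (divs n)).
  set (B1 := filter dp2 B).
  set (B2 := filter (fun d => negb (dp2 d)) B).
  rewrite (sumZ_filter moebius dp). fold B A.
  rewrite (sumZ_filter moebius dp2 B). fold B1 B2.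
  rewrite (sumZ_zero moebius B1).
  2:{ intros d Hd. unfold B1, B in Hd. rewrite !filter_In, divs_spec' in Hd by auto.
      destruct Hd as [[[H1 _] _] H3]. apply (moebius_sq p d Hp H1). apply Edp2; auto. }
  assert (P : Permutation B2 (map (Nat.mul p) A)).
  { apply NoDup_Permutation.
    - unfold B2, B. apply NoDup_filter, NoDup_filter, divs_nodup.
    - apply NoDup_map_NoDup_ForallPairs. intros x y _ _ E. apply (Nat.mul_cancel_l _ _ p); lia.
      unfold A. apply NoDup_filter, divs_nodup.
    - intros d. unfold B2, B, A. rewrite in_map_iff, !filter_In, divs_spec' by auto.
      rewrite negb_true_iff. split.
      + intros [[[H1 H2] H3] H4]. apply Edp in H3. destruct H3 as [t ->].
        exists t. split; [lia|]. rewrite filter_In, divs_spec' by auto. split; [split|].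
        * nia.
        * destruct H2 as [u Hu]. exists (u * p)%nat. lia.
        * apply negb_true_iff. destruct (dp t) eqn:E; auto. apply Edp in E. destruct E as [v ->].
          exfalso. assert (dp2 (v * p * p)%nat = true) by (apply Edp2; exists v; lia). congruence.
      + intros [e [<- He]]. rewrite filter_In, divs_spec' in He by auto.
        destruct He as [[He1 He2] He3]. apply negb_true_iff in He3.
        assert (Hnd : ~ Nat.divide p e) by (intro H; apply Edp in H; congruence).
        split; [split; [split|]|].
        * nia.
        * destruct He2 as [k Hk]. assert (Hk' : Nat.divide p (e * k)) by (replace (e * k)%nat with n by lia; auto).
          apply (gauss_prime p e k Hp Hnd) in Hk'. destruct Hk' as [j ->]. exists j. lia.
        * apply Edp. exists e. lia.
        * destruct (dp2 (p * e)%nat) eqn:E; auto. apply Edp2 in E. exfalso. apply Hnd.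
          destruct E as [t Ht]. exists t. apply (Nat.mul_cancel_l _ _ p); lia. }
  rewrite (sumZ_perm _ _ (Permutation_map moebius P)). rewrite map_map.
  rewrite (sumZ_ext _ (fun e => - moebius e)%Z).
  - rewrite sumZ_opp. lia.
  - intros e He. unfold A in He. rewrite filter_In, divs_spec' in He by auto.
    destruct He as [[He1 _] He3]. apply moebius_pe; auto.
    intro H; apply Edp in H. rewrite H in He3. discriminate.
Qed.

Open Scope nat_scope.
Open Scope Z_scope.

Lemma sumZ_mul_l {A} c (F : A -> Z) l : (c * sumZ (map F l))%Z = sumZ (map (fun x => c * F x)%Z l).
Proof. induction l; simpl; auto. lia. rewrite <- IHl. lia. Qed.

Lemma sumZ_plus {A} (F G : A -> Z) l : sumZ (map (fun x => F x + G x)%Z l) = (sumZ (map F l) + sumZ (map G l))%Z.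
Proof. induction l; simpl; auto. rewrite IHl. lia. Qed.

Lemma sumZ_filter_if {A} (F : A -> Z) (P : A -> bool) l :
  sumZ (map F (filter P l)) = sumZ (map (fun x => if P x then F x else 0%Z) l).
Proof. induction l; simpl; auto. destruct (P a); simpl; rewrite IHl; lia. Qed.

Lemma sumZ_swap {A B} (F : A -> B -> Z) X Y :
  sumZ (map (fun x => sumZ (map (fun y => F x y) Y)) X) = sumZ (map (fun y => sumZ (map (fun x => F x y) X)) Y).
Proof.
  induction X as [|x X IH]; simpl.
  - induction Y; simpl; auto.
  - rewrite IH. rewrite <- sumZ_plus. auto.
Qed.

Lemma sumZ_exchange {A} (F : A -> A -> Z) (R : A -> A -> bool) X Y :
  sumZ (map (fun x => sumZ (map (fun y => F x y) (filter (R x) Y))) X) =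
  sumZ (map (fun y => sumZ (map (fun x => F x y) (filter (fun x => R x y) X))) Y).
Proof.
  rewrite (sumZ_ext _ (fun x => sumZ (map (fun y => if R x y then F x y else 0%Z) Y))).
  2:{ intros; apply sumZ_filter_if. }
  rewrite sumZ_swap. apply sumZ_ext. intros y _. rewrite sumZ_filter_if. auto.
Qed.

Lemma sumZ_single {A} (F : A -> Z) l a : NoDup l -> In a l -> (forall x, In x l -> x <> a -> F x = 0%Z) ->
  sumZ (map F l) = F a.
Proof.
  induction 1 as [|x l Hx Hl IH]; intros Ha H; [destruct Ha|]. simpl.
  destruct Ha as [<-|Ha].
  - rewrite sumZ_zero; [lia|]. intros y Hy. apply H; [right; auto|]. intros ->; contradiction.
  - rewrite H; [|left; auto|intros ->; contradiction]. rewrite IH; auto. intros y Hy; apply H; right; auto.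
Qed.

Lemma div_div_self m d : (1 <= m)%nat -> (1 <= d)%nat -> Nat.divide d m -> (m / (m / d))%nat = d.
Proof.
  intros Hm Hd [q ->]. rewrite Nat.div_mul by lia. rewrite Nat.mul_comm, Nat.div_mul by nia. auto.
Qed.

Open Scope nat_scope.
Theorem mobius_inv (g G : nat -> Z) m : (1 <= m)%nat ->
  (forall n, (1 <= n)%nat -> G n = sumZ (map g (divs n))) -> PhiZ m G = g m.
Proof.
  intros Hm HG. unfold PhiZ. fold (sumZ (map (fun d => (moebius (m / d)%nat * G d)%Z) (divs m))).
  set (R := fun d e => (d mod e =? 0)%nat).
  rewrite (sumZ_ext _ (fun d => sumZ (map (fun e => moebius (m / d)%nat * g e) (filter (R d) (divs m))))%Z).
  2:{ intros d Hd. apply divs_spec' in Hd; auto. destruct Hd as [Hd1 Hd2].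
      rewrite HG by auto. rewrite sumZ_mul_l. apply sumZ_perm. apply Permutation_map.
      apply NoDup_Permutation; [apply divs_nodup| apply NoDup_filter, divs_nodup|].
      intros e. unfold R. rewrite filter_In, !divs_spec', Nat.eqb_eq by auto. split.
      - intros [H1 H2]. split; [split; auto; apply Nat.divide_trans with d; auto|]. apply mod0_divide; auto; lia.
      - intros [[H1 H2] H3]. split; auto. apply mod0_divide; auto; lia. }
  rewrite (sumZ_exchange (fun d e => moebius (m / d)%nat * g e)%Z R).
  rewrite (sumZ_single _ (divs m) m); [| apply divs_nodup | apply divs_spec'; auto; split; auto; apply Nat.divide_refl |].
  -
    rewrite (sumZ_single _ _ m).
    + rewrite Nat.div_same by lia. replace (moebius 1) with 1%Z by reflexivity. lia.
    + apply NoDup_filter. fold (divs m). apply divs_nodup.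
    + fold (divs m). unfold R. rewrite filter_In, divs_spec', Nat.eqb_eq by auto. split; [split; auto; apply Nat.divide_refl|].
      apply Nat.mod_same; lia.
    + fold (divs m). intros d Hd Hne. unfold R in Hd. rewrite filter_In, divs_spec', Nat.eqb_eq in Hd by auto.
      destruct Hd as [[H1 H2] H3]. apply mod0_divide in H3; [|lia].
      apply Nat.divide_pos_le in H2; [|lia]. apply Nat.divide_pos_le in H3; [|lia]. lia.
  - intros e He Hne. apply divs_spec' in He; auto. destruct He as [He1 He2].
    rewrite <- (sumZ_ext (fun d => g e * moebius (m / d)%nat)%Z) by (intros; lia).
    rewrite <- sumZ_mul_l.
    assert (P : Permutation (map (fun d => m / d) (filter (fun d => R d e) (divs m))) (divs (m / e))).
    { destruct He2 as [a Ha].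
      assert (Ha1 : (1 <= a)%nat) by nia.
      assert (Eme : m / e = a) by (rewrite Ha; apply Nat.div_mul; lia).
      apply NoDup_Permutation.
      - apply NoDup_map_NoDup_ForallPairs; [|apply NoDup_filter, divs_nodup].
        intros x y Hx Hy E. unfold R in Hx, Hy. rewrite filter_In, divs_spec', Nat.eqb_eq in Hx, Hy by auto.
        rewrite <- (div_div_self m x), <- (div_div_self m y) by tauto. rewrite E; auto.
      - apply divs_nodup.
      - intros k. rewrite in_map_iff, divs_spec' by (rewrite Eme; auto). rewrite Eme. split.
        + intros [d [<- Hd]]. unfold R in Hd. rewrite filter_In, divs_spec', Nat.eqb_eq in Hd by auto.
          destruct Hd as [[Hd1 [c Hc]] Hde]. apply mod0_divide in Hde; [|lia]. destruct Hde as [b ->].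
          rewrite Hc. rewrite Nat.div_mul by lia. split; [nia|]. exists b.
          apply (Nat.mul_cancel_r _ _ e); [lia|]. lia.
        + intros [Hk [c Hc]]. exists (e * c)%nat. split.
          * rewrite Ha, Hc. replace (c * k * e)%nat with (k * (e * c))%nat by lia. apply Nat.div_mul. nia.
          * unfold R. rewrite filter_In, divs_spec', Nat.eqb_eq by auto. split; [split; [nia|]|].
            -- exists k. lia.
            -- apply mod0_divide; [lia|]. exists c. lia. }
    fold (divs m). rewrite <- (map_map (fun d => m / d) moebius).
    rewrite (sumZ_perm _ _ (Permutation_map moebius P)).
    rewrite moebius_sum.
    + destruct (Nat.eqb_spec (m / e) 1) as [E|E]; [|lia]. exfalso. apply Hne.
      destruct He2 as [a ->]. rewrite Nat.div_mul in E by lia. subst; lia.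
    + destruct He2 as [a Ha]. rewrite Ha. rewrite Nat.div_mul by lia. nia.
Qed.

Open Scope nat_scope.
Open Scope Z_scope.

Lemma Phi1_MP m : (1 <= m)%nat -> Phi1 m = Z.of_nat (length (MP m)).
Proof.
  intros Hm. unfold Phi1. apply (mobius_inv (fun d => Z.of_nat (length (MP d))) lucas m Hm). intros; apply lucas_MP; auto.
Qed.

Lemma lucas_rec n : lucas (S (S n)) = lucas (S n) + lucas n.
Proof. reflexivity. Qed.

Lemma lucas_pos n : 1 <= lucas n.
Proof.
  assert (H : forall n, 1 <= lucas n /\ 1 <= lucas (S n)).
  { induction n0; [simpl; lia|]. destruct IHn0; split; auto. rewrite lucas_rec; lia. }
  apply H.
Qed.

Lemma lucas_mono_S n : (1 <= n)%nat -> lucas n <= lucas (S n).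
Proof.
  intros Hn. destruct n; [lia|]. rewrite lucas_rec. pose proof (lucas_pos n); lia.
Qed.

Lemma lucas_mono a b : (1 <= a)%nat -> (a <= b)%nat -> lucas a <= lucas b.
Proof.
  intros Ha Hab. induction Hab; [lia|]. pose proof (lucas_mono_S m ltac:(lia)); lia.
Qed.

Lemma lucas_ge_n n : Z.of_nat n <= lucas n.
Proof.
  assert (H : forall n, Z.of_nat n <= lucas n /\ Z.of_nat (S n) <= lucas (S n)).
  { induction n0; [simpl; lia|]. destruct IHn0; split; auto. rewrite lucas_rec.
    pose proof (lucas_pos n0). lia. }
  apply H.
Qed.

Lemma sumZ_nonneg {A} (F : A -> Z) l : (forall x, In x l -> 0 <= F x) -> 0 <= sumZ (map F l).
Proof. induction l; simpl; intros H; [lia|]. pose proof (H a (or_introl eq_refl)). pose proof (IHl (fun x Hx => H x (or_intror Hx))). lia. Qed.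

Lemma sumZ_mono {A} (F G : A -> Z) l : (forall x, In x l -> F x <= G x) -> sumZ (map F l) <= sumZ (map G l).
Proof. induction l; simpl; intros H; [lia|]. pose proof (H a (or_introl eq_refl)). pose proof (IHl (fun x Hx => H x (or_intror Hx))). lia. Qed.

Lemma sumZ_split_elem (F : nat -> Z) l a : NoDup l -> In a l ->
  sumZ (map F l) = F a + sumZ (map F (filter (fun x => negb (x =? a)%nat) l)).
Proof.
  intros Hnd Ha. rewrite (sumZ_filter F (fun x => (x =? a)%nat)).
  assert (P : Permutation (filter (fun x => (x =? a)%nat) l) [a]).
  { apply NoDup_Permutation; [apply NoDup_filter; auto|repeat constructor; auto|].
    intros x. rewrite filter_In, Nat.eqb_eq. simpl. split; [intros [_ ->]; auto|intros [<-|[]]; auto]. }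
  rewrite (sumZ_perm _ _ (Permutation_map F P)). simpl. lia.
Qed.

Lemma sumZ_le_incl (F : nat -> Z) l l' : NoDup l -> NoDup l' -> incl l l' -> (forall x, 0 <= F x) ->
  sumZ (map F l) <= sumZ (map F l').
Proof.
  intros H1 H2 Hi HF.
  rewrite (sumZ_filter F (fun x => if in_dec Nat.eq_dec x l then true else false) l').
  assert (P : Permutation (filter (fun x => if in_dec Nat.eq_dec x l then true else false) l') l).
  { apply NoDup_Permutation; [apply NoDup_filter; auto|auto|].
    intros x. rewrite filter_In. destruct (in_dec Nat.eq_dec x l); split; intuition. discriminate. }
  rewrite (sumZ_perm _ _ (Permutation_map F P)).
  pose proof (sumZ_nonneg F (filter (fun x => negb (if in_dec Nat.eq_dec x l then true else false)) l') (fun x _ => HF x)).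
  lia.
Qed.

Definition Sl (k : nat) : Z := sumZ (map lucas (seq 1 k)).

Lemma Sl_eq k : Sl k = lucas (k + 2) - 3.
Proof.
  induction k; [reflexivity|]. unfold Sl in *. rewrite seq_S, map_app, sumZ_app, IHk.
  replace (S k + 2)%nat with (S (S (k + 1))) by lia. rewrite lucas_rec.
  replace (k + 2)%nat with (S (k + 1)) by lia. replace (1 + k)%nat with (k + 1)%nat by lia. simpl. lia.
Qed.

Lemma Phi1_bounds m : (1 <= m)%nat -> 0 <= Phi1 m <= lucas m /\ lucas m <= Phi1 m + Sl (m / 2).
Proof.
  intros Hm. rewrite Phi1_MP by auto. rewrite lucas_MP by auto.
  assert (Hmi : In m (divs m)) by (apply divs_spec'; auto; split; auto; apply Nat.divide_refl).
  rewrite (sumZ_split_elem _ (divs m) m (divs_nodup m) Hmi).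
  set (rest := filter (fun x => negb (x =? m)%nat) (divs m)).
  assert (Hr : forall d, In d rest -> (1 <= d)%nat /\ (d <= m / 2)%nat).
  { intros d Hd. unfold rest in Hd. rewrite filter_In, divs_spec', negb_true_iff, Nat.eqb_neq in Hd by auto.
    destruct Hd as [[Hd1 [q Hq]] Hne]. split; auto.
    assert (q <> 0%nat) by (intro; subst; lia). assert (q <> 1%nat) by (intro; subst; lia).
    apply Nat.div_le_lower_bound; nia. }
  split; [split|].
  - lia.
  - pose proof (sumZ_nonneg (fun d => Z.of_nat (length (MP d))) rest (fun x _ => Nat2Z.is_nonneg _)). lia.
  - assert (H1 : sumZ (map (fun d => Z.of_nat (length (MP d))) rest) <= sumZ (map lucas rest)).
    { apply sumZ_mono. intros d Hd. rewrite lucas_MP by (apply Hr; auto).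
      assert (Hd1 : (1 <= d)%nat) by (apply Hr; auto).
      assert (Hdi : In d (divs d)) by (apply divs_spec'; auto; split; auto; apply Nat.divide_refl).
      rewrite (sumZ_split_elem _ (divs d) d (divs_nodup d) Hdi).
      pose proof (sumZ_nonneg (fun d => Z.of_nat (length (MP d))) (filter (fun x => negb (x =? d)%nat) (divs d)) (fun x _ => Nat2Z.is_nonneg _)). lia. }
    assert (H2 : sumZ (map lucas rest) <= Sl (m / 2)).
    { apply sumZ_le_incl.
      - unfold rest; apply NoDup_filter, divs_nodup.
      - apply seq_NoDup.
      - intros d Hd. apply Hr in Hd. apply in_seq. lia.
      - intros; pose proof (lucas_pos x); lia. }
    lia.
Qed.

Lemma mono_int m : (10 <= m)%nat -> Z.of_nat (S m) * Phi1 m < Z.of_nat m * Phi1 (S m).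
Proof.
  intros Hm.
  destruct (Phi1_bounds m ltac:(lia)) as [[H0 H1] _].
  destruct (Phi1_bounds (S m) ltac:(lia)) as [[H2 _] H3].
  rewrite Sl_eq in H3.
  set (k := (S m / 2)%nat) in *.
  assert (Hk : (k + 4 <= m - 1)%nat) by (unfold k; assert (HH := Nat.div_mod (S m) 2 ltac:(lia)); pose proof (Nat.mod_upper_bound (S m) 2 ltac:(lia)); lia).
  assert (E1 : lucas (S m) = lucas m + lucas (m - 1)).
  { replace (S m) with (S (S (m - 1))) by lia. rewrite lucas_rec. replace (S (m - 1)) with m by lia. auto. }
  assert (E2 : lucas m = lucas (m - 1) + lucas (m - 2)).
  { replace m with (S (S (m - 2))) at 1 by lia. rewrite lucas_rec. replace (S (m - 2)) with (m - 1)%nat by lia. auto. }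
  assert (M1 : lucas (m - 2) <= lucas (m - 1)) by (apply lucas_mono; lia).
  assert (M2 : 2 * lucas (k + 2) <= lucas (m - 1)).
  { assert (lucas (k + 4) <= lucas (m - 1)) by (apply lucas_mono; lia).
    replace (k + 4)%nat with (S (S (S (k + 1)))) in H by lia.
    rewrite !lucas_rec in H. replace (S (k + 1)) with (k + 2)%nat in H by lia.
    pose proof (lucas_pos (k + 1)). lia. }
  pose proof (lucas_pos (k + 2)). pose proof (lucas_pos (m - 1)).
  assert (Hmz : 10 <= Z.of_nat m) by lia.
  rewrite Nat2Z.inj_succ.
  set (A := lucas (m - 1)) in *. set (D := lucas (k + 2)) in *. set (B := lucas m) in *.
  set (P := Phi1 m) in *. set (Q := Phi1 (S m)) in *. set (z := Z.of_nat m) in *.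
  assert (z * Q >= z * (lucas (S m) - D + 3)) by nia.
  assert ((z + 1) * P <= (z + 1) * B) by nia.
  rewrite E1 in *. nia.
Qed.

Open Scope nat_scope.
Open Scope R_scope.

Lemma div_lt_cross x y a b : 0 < a -> 0 < b -> x * b < y * a -> x / a < y / b.
Proof.
  intros Ha Hb H. apply (Rmult_lt_reg_r (a * b)); [nra|].
  replace (x / a * (a * b)) with (x * b) by (field; lra).
  replace (y / b * (a * b)) with (y * a) by (field; lra). auto.
Qed.

Lemma mono_all m : (6 <= m)%nat -> (Z.of_nat (S m) * Phi1 m < Z.of_nat m * Phi1 (S m))%Z.
Proof.
  intros Hm. destruct (le_lt_dec 10 m) as [H|H]; [apply mono_int; auto|].
  assert (m = 6 \/ m = 7 \/ m = 8 \/ m = 9)%nat as [E|[E|[E|E]]] by lia; subst m; vm_compute; reflexivity.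
Qed.

Theorem partC1 : forall m : nat, (6 <= m)%nat -> Phi1_over m < Phi1_over (S m).
Proof.
  intros m Hm. unfold Phi1_over. apply div_lt_cross.
  - apply lt_0_INR; lia.
  - apply lt_0_INR; lia.
  - rewrite !INR_IZR_INZ, <- !mult_IZR. apply IZR_lt.
    pose proof (mono_all m Hm). lia.
Qed.

Open Scope nat_scope.
Open Scope R_scope.

Lemma cv_bound (u : nat -> R) l C N : (forall n, (N <= n)%nat -> Rabs (u n - l) <= C / (INR n + 1)) -> Un_cv u l.
Proof.
  intros H eps Heps. destruct (INR_unbounded (Rabs C / eps)) as [N' HN'].
  exists (Nat.max N N'). intros n Hn. unfold Rdist.
  eapply Rle_lt_trans; [apply H; lia|].
  assert (HnN : INR N' <= INR n) by (apply le_INR; lia).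
  assert (Hpos : 0 < INR n + 1) by (pose proof (pos_INR n); lra).
  apply (Rmult_lt_reg_r (INR n + 1)); auto. unfold Rdiv. rewrite Rmult_assoc, Rinv_l by lra. rewrite Rmult_1_r.
  assert (Rabs C / eps * eps = Rabs C) by (field; lra).
  assert (C <= Rabs C) by apply Rle_abs.
  nra.
Qed.

Lemma cv_eventually (u v : nat -> R) l N : (forall n, (N <= n)%nat -> u n = v n) -> Un_cv v l -> Un_cv u l.
Proof.
  intros H Hv eps Heps. destruct (Hv eps Heps) as [N' HN']. exists (Nat.max N N').
  intros n Hn. rewrite H by lia. apply HN'; lia.
Qed.

Definition phi : R := (1 + sqrt 5) / 2.

Lemma sqrt5_facts : sqrt 5 * sqrt 5 = 5 /\ 2 < sqrt 5 < 3.
Proof.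
  assert (H : sqrt 5 * sqrt 5 = 5) by (apply sqrt_sqrt; lra).
  assert (H0 : 0 <= sqrt 5) by apply sqrt_pos.
  split; auto. split; nra.
Qed.

Lemma phi_sq : phi * phi = phi + 1.
Proof. destruct sqrt5_facts as [H _]. unfold phi. nra. Qed.

Definition Lr (n : nat) : R := IZR (lucas n).

Lemma err_bound n : Rabs (Lr (S n) - phi * Lr n) <= 3.
Proof.
  destruct sqrt5_facts as [H5 [H51 H52]].
  assert (Hphi : 1 < phi < 2) by (unfold phi; lra).
  induction n.
  - unfold Lr. change (lucas 1) with 1%Z. change (lucas 0) with 2%Z. unfold phi.
    replace (1 - (1 + sqrt 5) / 2 * 2) with (- sqrt 5) by field. rewrite Rabs_Ropp, Rabs_right by lra. lra.
  - assert (E : Lr (S (S n)) - phi * Lr (S n) = (1 - phi) * (Lr (S n) - phi * Lr n)).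
    { unfold Lr. rewrite lucas_rec, plus_IZR. set (X := IZR (lucas (S n))). set (Y := IZR (lucas n)).
      replace ((1 - phi) * (X - phi * Y)) with (X - phi * X - phi * Y + (phi * phi) * Y) by ring.
      rewrite phi_sq. ring. }
    rewrite E, Rabs_mult. rewrite (Rabs_left (1 - phi)) by lra.
    pose proof (Rabs_pos (Lr (S n) - phi * Lr n)). nra.
Qed.

Lemma Lr_ge n : INR n <= Lr n.
Proof. unfold Lr. rewrite INR_IZR_INZ. apply IZR_le. apply lucas_ge_n. Qed.

Lemma Lr_pos n : 1 <= Lr n.
Proof. unfold Lr. apply IZR_le. apply lucas_pos. Qed.

Lemma v_cv : Un_cv (fun n => Lr (S (S n)) / Lr (S n)) phi.
Proof.
  apply (cv_bound _ _ 3 0). intros n _.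
  pose proof (Lr_ge (S n)) as H1. rewrite S_INR in H1. pose proof (Lr_pos (S n)).
  pose proof (err_bound (S n)) as E.
  replace (Lr (S (S n)) / Lr (S n) - phi) with ((Lr (S (S n)) - phi * Lr (S n)) / Lr (S n)) by (field; lra).
  unfold Rdiv. rewrite Rabs_mult, Rabs_inv, (Rabs_right (Lr (S n))) by lra.
  apply Rmult_le_compat; auto.
  - apply Rabs_pos.
  - left; apply Rinv_0_lt_compat; lra.
  - pose proof (pos_INR n). apply Rinv_le_contravar; lra.
Qed.

Lemma t_cv : Un_cv (fun n => INR (S n) / INR (S (S n))) 1.
Proof.
  apply (cv_bound _ _ 1 0). intros n _. rewrite !S_INR. pose proof (pos_INR n).
  replace ((INR n + 1) / (INR n + 1 + 1) - 1) with (- (1 / (INR n + 1 + 1))) by (field; lra).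
  rewrite Rabs_Ropp, Rabs_right by (apply Rle_ge; left; apply Rdiv_lt_0_compat; lra).
  unfold Rdiv. rewrite !Rmult_1_l. apply Rinv_le_contravar; lra.
Qed.

Lemma lucas_half n : (7 <= n)%nat -> ((Z.of_nat n + 1) * lucas (n / 2 + 2) <= 4 * lucas n)%Z.
Proof.
  induction n as [n IH] using lt_wf_ind. intros Hn.
  destruct (le_lt_dec 9 n) as [H9|H9].
  - specialize (IH (n - 2)%nat ltac:(lia) ltac:(lia)).
    assert (Hd : (n / 2 = (n - 2) / 2 + 1)%nat).
    { replace n with ((n - 2) + 1 * 2)%nat at 1 by lia. apply Nat.div_add; lia. }
    rewrite Hd. set (a := ((n - 2) / 2 + 2)%nat) in *.
    replace ((n - 2) / 2 + 1 + 2)%nat with (S a) by (unfold a; lia).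
    assert (Ha2 : (2 <= a)%nat) by (unfold a; lia).
    assert (E1 : lucas (S a) = (lucas a + lucas (a - 1))%Z).
    { replace (S a) with (S (S (a - 1))) by lia. rewrite lucas_rec. replace (S (a - 1)) with a by lia. auto. }
    assert (M1 : (lucas (a - 1) <= lucas a)%Z) by (apply lucas_mono; lia).
    assert (E2 : lucas n = (lucas (n - 1) + lucas (n - 2))%Z).
    { replace n with (S (S (n - 2))) at 1 by lia. rewrite lucas_rec. replace (S (n - 2)) with (n - 1)%nat by lia. auto. }
    assert (E3 : lucas (n - 1) = (lucas (n - 2) + lucas (n - 3))%Z).
    { replace (n - 1)%nat with (S (S (n - 3))) by lia. rewrite lucas_rec. replace (S (n - 3)) with (n - 2)%nat by lia. auto. }
    assert (E4 : lucas (n - 2) = (lucas (n - 3) + lucas (n - 4))%Z).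
    { replace (n - 2)%nat with (S (S (n - 4))) by lia. rewrite lucas_rec. replace (S (n - 4)) with (n - 3)%nat by lia. auto. }
    assert (M2 : (lucas (n - 4) <= lucas (n - 3))%Z) by (apply lucas_mono; lia).
    rewrite Nat2Z.inj_sub in IH by lia.
    pose proof (lucas_pos a). assert (Hz : (9 <= Z.of_nat n)%Z) by lia.
    nia.
  - assert (n = 7 \/ n = 8)%nat as [E|E] by lia; subst n; vm_compute; intros; discriminate.
Qed.

Lemma Rdiv_le_0_compat a b : 0 <= a -> 0 < b -> 0 <= a / b.
Proof. intros; unfold Rdiv; apply Rmult_le_pos; auto; left; apply Rinv_0_lt_compat; auto. Qed.

Definition Pr (n : nat) : R := IZR (Phi1 n).

Lemma Phi_close n : (7 <= n)%nat -> (INR n + 1) * (Lr n - Pr n) <= 4 * Lr n /\ Pr n <= Lr n.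
Proof.
  intros Hn. destruct (Phi1_bounds n ltac:(lia)) as [[H0 H1] H2]. rewrite Sl_eq in H2.
  pose proof (lucas_half n Hn).
  unfold Lr, Pr. split.
  - rewrite INR_IZR_INZ. rewrite <- minus_IZR, <- plus_IZR, <- !mult_IZR. apply IZR_le. nia.
  - apply IZR_le; auto.
Qed.

Lemma u_cv : Un_cv (fun n => Pr (S (S n)) / Lr (S (S n))) 1.
Proof.
  apply (cv_bound _ _ 4 5). intros n Hn.
  destruct (Phi_close (S (S n)) ltac:(lia)) as [H1 H2].
  pose proof (Lr_pos (S (S n))). rewrite !S_INR in H1. pose proof (pos_INR n).
  replace (Pr (S (S n)) / Lr (S (S n)) - 1) with (- ((Lr (S (S n)) - Pr (S (S n))) / Lr (S (S n)))) by (field; lra).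
  rewrite Rabs_Ropp, Rabs_right by (apply Rle_ge; apply Rdiv_le_0_compat; lra).
  apply (Rmult_le_reg_r (Lr (S (S n)) * (INR n + 1))); [nra|].
  replace ((Lr (S (S n)) - Pr (S (S n))) / Lr (S (S n)) * (Lr (S (S n)) * (INR n + 1))) with
    ((Lr (S (S n)) - Pr (S (S n))) * (INR n + 1)) by (field; lra).
  replace (4 / (INR n + 1) * (Lr (S (S n)) * (INR n + 1))) with (4 * Lr (S (S n))) by (field; lra).
  nra.
Qed.

Lemma w_cv : Un_cv (fun n => Lr (S n) / Pr (S n)) 1.
Proof.
  apply (cv_bound _ _ 8 6). intros n Hn.
  destruct (Phi_close (S n) ltac:(lia)) as [H1 H2].
  pose proof (Lr_pos (S n)). rewrite !S_INR in H1. pose proof (pos_INR n).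
  assert (Hn6 : 6 <= INR n) by (replace 6 with (INR 6) by (simpl; lra); apply le_INR; lia).
  assert (HP : Lr (S n) / 2 <= Pr (S n)) by nra.
  replace (Lr (S n) / Pr (S n) - 1) with ((Lr (S n) - Pr (S n)) / Pr (S n)) by (field; lra).
  rewrite Rabs_right by (apply Rle_ge; apply Rdiv_le_0_compat; lra).
  apply (Rmult_le_reg_r (Pr (S n) * (INR n + 1))); [nra|].
  replace ((Lr (S n) - Pr (S n)) / Pr (S n) * (Pr (S n) * (INR n + 1))) with
    ((Lr (S n) - Pr (S n)) * (INR n + 1)) by (field; lra).
  replace (8 / (INR n + 1) * (Pr (S n) * (INR n + 1))) with (8 * Pr (S n)) by (field; lra).
  nra.
Qed.

Theorem partC2 : Un_cv (fun n : nat => Phi1_over (S (S n)) / Phi1_over (S n)) ((1 + sqrt 5) / 2).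
Proof.
  fold phi.
  assert (H := CV_mult _ _ _ _ (CV_mult _ _ _ _ (CV_mult _ _ _ _ u_cv v_cv) w_cv) t_cv).
  replace (1 * phi * 1 * 1) with phi in H by ring.
  eapply (cv_eventually _ _ _ 6%nat); [|exact H].
  intros n Hn. cbv beta.
  destruct (Phi_close (S n) ltac:(lia)) as [H1 H2].
  pose proof (Lr_pos (S n)). pose proof (Lr_pos (S (S n))). rewrite !S_INR in H1. pose proof (pos_INR n).
  assert (Hn6 : 6 <= INR n) by (replace 6 with (INR 6) by (simpl; lra); apply le_INR; lia).
  assert (HP : Lr (S n) / 2 <= Pr (S n)) by nra.
  unfold Phi1_over. fold (Pr (S (S n))) (Pr (S n)). rewrite !S_INR.
  field. repeat split; lra.
Qed.


Open Scope R_scope.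
Theorem theorem1 :
  (* (a) number of solutions of f^m(x) = x in [1,3] is the m-th Lucas number *)
  (forall m : nat, (1 <= m)%nat ->
     exists l : list R, NoDup l /\
       (forall x, In x l <-> (1 <= x <= 3 /\ iter m fmap x = x)) /\
       Z.of_nat (length l) = lucas m)
  /\
  (* (b) exactly Phi1(m)/m distinct periodic orbits of minimal period m *)
  (forall m : nat, (1 <= m)%nat ->
     exists reps : list R,
       (forall a, In a reps -> 1 <= a <= 3 /\ min_period fmap m a) /\
       (forall i j, (i < length reps)%nat -> (j < length reps)%nat -> i <> j ->
          ~ (forall y, in_orbit fmap (nth i reps 0) y <-> in_orbit fmap (nth j reps 0) y)) /\
       (forall x, 1 <= x <= 3 -> min_period fmap m x ->
          exists a, In a reps /\ (forall y, in_orbit fmap a y <-> in_orbit fmap x y)) /\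
       INR (length reps) = Phi1_over m)
  /\
  (* (c) strict monotonicity from m = 6 on, and ratio limit *)
  (forall m : nat, (6 <= m)%nat -> Phi1_over m < Phi1_over (S m))
  /\
  Un_cv (fun n : nat => Phi1_over (S (S n)) / Phi1_over (S n)) ((1 + sqrt 5) / 2).
Proof.
  split; [exact partA|]. split.
  - intros m Hm. apply partB_gen; auto. apply Phi1_MP; auto.
  - split; [exact partC1|exact partC2].
Qed.
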